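(* Let $p_1,p_2,\dots$ be a sequence with $0\le p_j\le 1$ for all $j$, and let $I_1,I_2,\dots$ be independent Bernoulli random variables with $P(I_k=1)=p_k$. Put $q_k=1-p_k$, $r_k=p_k/q_k$ (with $r_k=\infty$ if $p_k=1$), and for $1\le k\le n$ let $R(1,n)=\sum_{j=1}^n r_j$. For each $n\ge1$ let $V(n)$ be the maximal probability, over all stopping times $\tau$ with respect to $\mathcal F_k=\sigma(I_1,\dots,I_k)$ taking values in $\{1,\dots,n\}$, that $I_\tau=1$ and $I_j=0$ for all $\tau<j\le n$. Let $$N^*=\sup\{n\in\mathbb N: R(1,n)\le 1\}\in\mathbb N\cup\{\infty\}.$$ Then $V(n)$ is non-decreasing in $n$ for $1\le n\le N^*$, i.e. $V(n)\le V(n+1)$ for every positive integer $n$ with $n+1\le N^*$.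
   Context: $V(n)$ is the optimal probability of stopping online (without recall) on the last index $k\le n$ with $I_k=1$ (the ''$n$-problem''). *)

(* Defs.v *)
From HB Require Import structures.
From mathcomp Require Import all_boot all_order all_algebra.
Set Implicit Arguments. Unset Strict Implicit. Unset Printing Implicit Defensive.
Import Order.TTheory GRing.Theory Num.Theory.
Local Open Scope ring_scope.

(* Sequence p : nat -> R, indexed from 1 (p 0 is irrelevant).
   An outcome of (I_1,...,I_n) is w : {ffun 'I_n -> bool}, where w j = I_{j+1}. *)
Definition outcome (n : nat) := {ffun 'I_n -> bool}.

Definition weight {R : realFieldType} (p : nat -> R) (n : nat) (w : outcome n) : R :=
  \prod_(j < n) (if w j then p j.+1 else 1 - p j.+1).

(* A rule tau : outcome -> 'I_n (value j means stopping at time j+1) is a stopping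
   time w.r.t. F_k = sigma(I_1..I_k): whether tau = j is determined by I_1..I_{j+1}. *)
Definition is_stopping (n : nat) (tau : {ffun outcome n -> 'I_n}) : bool :=
  [forall w : outcome n, forall w' : outcome n,
     [forall j : 'I_n, (j <= tau w)%N ==> (w j == w' j)] ==> (tau w' == tau w)].

Definition success (n : nat) (tau : {ffun outcome n -> 'I_n}) (w : outcome n) : bool :=
  w (tau w) && [forall j : 'I_n, (tau w < j)%N ==> ~~ w j].

Definition win_prob {R : realFieldType} (p : nat -> R) (n : nat)
    (tau : {ffun outcome n -> 'I_n}) : R :=
  \sum_(w : outcome n | success tau w) weight p w.

Definition V {R : realFieldType} (p : nat -> R) (n : nat) : R :=
  \big[Num.max/0]_(tau : {ffun outcome n -> 'I_n} | is_stopping tau) win_prob p tau.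

(* "R(1,n) <= 1", where r_j = p_j/(1-p_j) and r_j = +oo when p_j = 1. *)
Definition R1_le1 {R : realFieldType} (p : nat -> R) (n : nat) : Prop :=
  (forall j, (1 <= j <= n)%N -> p j < 1) /\
  \sum_(1 <= j < n.+1) p j / (1 - p j) <= 1.

(* Main.v *)
Require Import Defs.
From mathcomp Require Import all_boot all_order all_algebra.
From mathcomp Require Import ring lra zify.
Import Order.TTheory GRing.Theory Num.Theory.
Local Open Scope ring_scope.

Definition Pr {R : realFieldType} (p : nat -> R) {n} (X : pred (outcome n)) : R :=
  \sum_(w : outcome n | X w) weight p w.

Lemma sum_prod_ffun (R : realFieldType) n (F : 'I_n -> bool -> R) :
  \sum_(w : outcome n) \prod_j F j (w j) = \prod_j (F j true + F j false).
Proof.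
rewrite (eq_bigr (fun j => \sum_(b : bool) F j b)); last by move=> j _; rewrite big_bool.
by rewrite bigA_distr_bigA.
Qed.

Lemma Pr_forall (R : realFieldType) (p : nat -> R) n (P : 'I_n -> pred bool) :
  Pr p (fun w : outcome n => [forall k, P k (w k)]) =
  \prod_(k < n) \sum_(b | P k b) (if b then p k.+1 else 1 - p k.+1).
Proof.
rewrite /Pr.
have -> : \sum_(w : outcome n | [forall k, P k (w k)]) weight p w =
  \sum_(w : outcome n) (if [forall k, P k (w k)] then weight p w else 0).
  by rewrite big_mkcond.
rewrite (eq_bigr (fun w : outcome n => \prod_k
   (if P k (w k) then (if w k then p k.+1 else 1 - p k.+1) else 0))).
  rewrite (@sum_prod_ffun _ _ (fun k b => if P k b then (if b then p k.+1 else 1 - p k.+1) else 0)); apply: eq_bigr => k _.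
  by rewrite big_mkcond big_bool.
move=> w _; rewrite /weight.
case: (boolP [forall k, P k (w k)]) => [/forallP H|/forallPn [k Hk]].
  by apply: eq_bigr => k _; rewrite H.
rewrite (bigD1 k) //= (negbTE Hk) mul0r //.
Qed.

Lemma weight_ge0 (R : realFieldType) (p : nat -> R) n (w : outcome n) :
  (forall j, 0 <= p j <= 1) -> 0 <= weight p w.
Proof.
move=> hp; rewrite /weight; apply: prodr_ge0 => j _.
have /andP[h1 h2] := hp j.+1; case: (w j) => //; by rewrite subr_ge0.
Qed.

Lemma Pr_sub (R : realFieldType) (p : nat -> R) n (X Y : pred (outcome n)) :
  (forall j, 0 <= p j <= 1) -> (forall w, X w -> Y w) -> Pr p X <= Pr p Y.
Proof.
move=> hp hXY; rewrite /Pr [leRHS](bigID X) /=.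
have -> : \sum_(w | Y w && X w) weight p w = \sum_(w | X w) weight p w.
  by apply: eq_bigl => w; apply/andP/idP => [[]//|h]; split=> //; exact: hXY.
rewrite lerDl; apply: sumr_ge0 => w _; exact: weight_ge0.
Qed.

Lemma Pr_split (R : realFieldType) (p : nat -> R) n (X Y : pred (outcome n)) :
  Pr p X = Pr p (fun w => X w && Y w) + Pr p (fun w => X w && ~~ Y w).
Proof. by rewrite /Pr (bigID Y). Qed.

Definition mix {n} (S : pred 'I_n) (w w' : outcome n) : outcome n :=
  [ffun k => if S k then w k else w' k].

Lemma indep (R : realFieldType) (p : nat -> R) n (S : pred 'I_n)
   (A B : pred (outcome n)) :
  (forall w w' : outcome n, (forall k, S k -> w k = w' k) -> A w = A w') ->
  (forall w w' : outcome n, (forall k, ~~ S k -> w k = w' k) -> B w = B w') ->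
  Pr p (fun w => A w && B w) = Pr p A * Pr p B.
Proof.
move=> hA hB.
have tot : \sum_(w : outcome n) weight p w = 1.
  have := @Pr_forall _ p n (fun (k : 'I_n) (b : bool) => true).
  rewrite /Pr (eq_bigl (fun _ => true)); last by move=> w; apply/forallP.
  move=> ->; apply: big1 => k _; rewrite big_bool /=; ring.
rewrite -[LHS]mulr1 -tot /Pr !mulr_suml.
under eq_bigr => w _ do rewrite mulr_sumr.
under [RHS]eq_bigr => w _ do rewrite mulr_sumr.
rewrite !pair_big /=.
pose phi (u : outcome n * outcome n) := (mix S u.1 u.2, mix S u.2 u.1).
have phiK : involutive phi.
  case=> w w'; rewrite /phi /mix /=; congr pair; apply/ffunP => k; rewrite !ffunE;
  by case: (S k).
rewrite (reindex_inj (inv_inj phiK)) /=.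
apply: eq_big.
  case=> w w' /=; rewrite andbT; congr andb.
    by apply: hA => k hk; rewrite /mix ffunE hk.
  by apply: hB => k hk; rewrite /mix ffunE (negbTE hk).
case=> w w' _ /=; rewrite /weight -!big_split /=; apply: eq_bigr => k _.
rewrite /mix !ffunE; case: (S k) => //; by rewrite mulrC.
Qed.

Lemma Pr_ext (R : realFieldType) (p : nat -> R) n (X Y : pred (outcome n)) :
  X =1 Y -> Pr p X = Pr p Y.
Proof. by move=> h; rewrite /Pr (eq_bigl _ _ h). Qed.

Lemma Pr_ge0 (R : realFieldType) (p : nat -> R) n (X : pred (outcome n)) :
  (forall j, 0 <= p j <= 1) -> 0 <= Pr p X.
Proof. by move=> hp; apply: sumr_ge0 => w _; exact: weight_ge0. Qed.

Lemma Pr_true (R : realFieldType) (p : nat -> R) n :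
  Pr p (fun _ : outcome n => true) = 1.
Proof.
have := @Pr_forall _ p n (fun (k : 'I_n) (b : bool) => true).
rewrite (@Pr_ext _ _ _ _ (fun _ => true)); last by move=> w; apply/forallP.
move=> ->; apply: big1 => k _; rewrite big_bool /=; ring.
Qed.

Lemma Pr_false (R : realFieldType) (p : nat -> R) n :
  Pr p (fun _ : outcome n => false) = 0.
Proof. by rewrite /Pr big_pred0. Qed.

Lemma stopP n (tau : {ffun outcome n -> 'I_n}) : is_stopping tau ->
  forall w w' : outcome n, (forall j : 'I_n, (j <= tau w)%N -> w j = w' j) ->
  tau w' = tau w.
Proof.
move=> /forallP hs w w' h; have /forallP/(_ w') /implyP := hs w.
move=> H; apply/eqP; apply: H; apply/forallP => j; apply/implyP => hj.
by rewrite (h j hj).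
Qed.

Lemma stop_lt n (tau : {ffun outcome n -> 'I_n}) : is_stopping tau ->
  forall (i : nat) (w w' : outcome n), (forall k : 'I_n, (k < i)%N -> w k = w' k) ->
  (i <= tau w)%N = (i <= tau w')%N.
Proof.
move=> hs i w w' h.
case: (ltnP (tau w) i) => h1.
  rewrite (@stopP _ _ hs w w') //; first by rewrite leqNgt h1.
  by move=> j hj; apply: h; exact: leq_ltn_trans hj h1.
case: (ltnP (tau w') i) => h2 //.
rewrite (@stopP _ _ hs w' w) in h1; first by rewrite leqNgt h2 in h1.
by move=> j hj; apply/esym/h; exact: leq_ltn_trans hj h2.
Qed.

Lemma stop_eqi n (tau : {ffun outcome n -> 'I_n}) : is_stopping tau ->
  forall (i : 'I_n) (w w' : outcome n), (forall k : 'I_n, (k <= i)%N -> w k = w' k) ->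
  (tau w == i) = (tau w' == i).
Proof.
move=> hs i w w' h.
case: (eqVneq (tau w) i) => [e|ne].
  by rewrite (@stopP _ _ hs w w') ?e ?eqxx // => j; rewrite e; apply: h.
case: (eqVneq (tau w') i) => [e|//].
have E : tau w = tau w'.
  by apply: (@stopP _ _ hs w' w) => j; rewrite e => hj; rewrite (h j hj).
by rewrite E e eqxx in ne.
Qed.

Definition Tq {R : realFieldType} (p : nat -> R) n (j : nat) : R :=
  \prod_(k < n | (j <= k)%N) (1 - p k.+1).
Definition Sr {R : realFieldType} (p : nat -> R) n (j : nat) : R :=
  \sum_(k < n | (j <= k)%N) p k.+1 / (1 - p k.+1).

Lemma cond_step n (i : 'I_n) (k : 'I_n) :
  ((i <= k)%N && (k != i)) = (i.+1 <= k)%N.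
Proof. by rewrite -(inj_eq val_inj) /= ltn_neqAle eq_sym andbC. Qed.

Lemma Tq_step (R : realFieldType) (p : nat -> R) n (i : 'I_n) :
  Tq p n i = (1 - p i.+1) * Tq p n i.+1.
Proof. by rewrite /Tq (bigD1 i) //=; congr (_ * _); apply: eq_bigl => k; rewrite cond_step. Qed.

Lemma Sr_step (R : realFieldType) (p : nat -> R) n (i : 'I_n) :
  Sr p n i = p i.+1 / (1 - p i.+1) + Sr p n i.+1.
Proof. by rewrite /Sr (bigD1 i) //=; congr (_ + _); apply: eq_bigl => k; rewrite cond_step. Qed.

Lemma Tq_ge0 (R : realFieldType) (p : nat -> R) n j :
  (forall j, 0 <= p j <= 1) -> 0 <= Tq p n j.
Proof.
move=> hp; apply: prodr_ge0 => k _; have /andP[_ h] := hp k.+1; by rewrite subr_ge0.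
Qed.

Lemma Sr_bounds (R : realFieldType) (p : nat -> R) n j :
  (forall j, 0 <= p j <= 1) -> (forall k : 'I_n, 0 < 1 - p k.+1) ->
  0 <= Sr p n j <= Sr p n 0.
Proof.
move=> hp hq.
have t0 : forall k : 'I_n, 0 <= p k.+1 / (1 - p k.+1).
  move=> k; have /andP[h _] := hp k.+1; apply: divr_ge0 => //; exact: ltW.
apply/andP; split; first by apply: sumr_ge0.
rewrite /Sr [leRHS](eq_bigl xpredT) // big_mkcond [leRHS]big_mkcond /=.
apply: ler_sum => k _; case: ifP => //= _; exact: t0.
Qed.

Lemma Tq_n (R : realFieldType) (p : nat -> R) n : Tq p n n = 1.
Proof. rewrite /Tq big_pred0 // => k; by rewrite leqNgt ltn_ord. Qed.
Lemma Sr_n (R : realFieldType) (p : nat -> R) n : Sr p n n = 0.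
Proof. rewrite /Sr big_pred0 // => k; by rewrite leqNgt ltn_ord. Qed.

Lemma Pr_tail (R : realFieldType) (p : nat -> R) n (i : nat) :
  Pr p (fun w : outcome n => [forall k : 'I_n, (i < k)%N ==> ~~ w k]) = Tq p n i.+1.
Proof.
rewrite (@Pr_forall _ p n (fun k b => (i < k)%N ==> ~~ b)) /Tq [RHS]big_mkcond.
apply: eq_bigr => k _; case: (ltnP i k) => hk /=.
  by rewrite big_mkcond big_bool /= add0r.
by rewrite big_bool /=; ring.
Qed.

Lemma Pr_coord (R : realFieldType) (p : nat -> R) n (i : 'I_n) :
  Pr p (fun w : outcome n => w i) = p i.+1.
Proof.
rewrite (@Pr_ext _ _ _ _ (fun w : outcome n => [forall k, (k == i) ==> w k])); last first.
  move=> w; apply/idP/forallP => [h k|h]; first by apply/implyP => /eqP ->.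
  by have := h i; rewrite eqxx.
rewrite (@Pr_forall _ p n (fun k b => (k == i) ==> b)) (bigD1 i) //= eqxx.
rewrite big_mkcond big_bool /= addr0 big1 ?mulr1 // => k hk.
by rewrite (negbTE hk) big_bool /=; ring.
Qed.

Lemma win_upper (R : realFieldType) (p : nat -> R) n (tau : {ffun outcome n -> 'I_n}) :
  (forall j, 0 <= p j <= 1) -> is_stopping tau ->
  (forall k : 'I_n, 0 < 1 - p k.+1) -> Sr p n 0 <= 1 ->
  win_prob p tau <= Tq p n 0 * Sr p n 0.
Proof.
move=> hp hs hq hS.
pose s j := Pr p (fun w : outcome n => (j <= tau w)%N).
pose c (i : 'I_n) := Pr p (fun w : outcome n => (tau w == i) && w i).
pose W j := Tq p n j * Sr p n j.
have win_eq : win_prob p tau = \sum_(i < n) c i * Tq p n i.+1.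
  rewrite /win_prob (partition_big (fun w => tau w) xpredT) //=.
  apply: eq_bigr => i _.
  have -> : \sum_(w | success tau w && (tau w == i)) weight p w =
     Pr p (fun w : outcome n => ((tau w == i) && w i) &&
                                 [forall k : 'I_n, (i < k)%N ==> ~~ w k]).
    rewrite /Pr; apply: eq_bigl => w; rewrite /success.
    by case: eqVneq => [->|_]; rewrite ?andbT ?andbF.
  rewrite (@indep _ p n (fun k : 'I_n => (k <= i)%N)
     (fun w => (tau w == i) && w i) (fun w => [forall k : 'I_n, (i < k)%N ==> ~~ w k])).
  - by rewrite Pr_tail.
  - move=> w w' h; by rewrite (@stop_eqi _ _ hs i w w' h) (h i (leqnn _)).
  - move=> w w' h; apply: eq_forallb => k; case: (ltnP i k) => hk //=.
    by rewrite h // -ltnNge.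
have c_le1 : forall i : 'I_n, c i <= p i.+1 * s i.
  move=> i; apply: (@le_trans _ _ (Pr p (fun w : outcome n => (i <= tau w)%N && w i))).
    by apply: Pr_sub => // w /andP[/eqP -> ->]; rewrite leqnn.
  rewrite (@indep _ p n (fun k : 'I_n => (k < i)%N) (fun w => (i <= tau w)%N) (fun w => w i)).
  - by rewrite Pr_coord mulrC.
  - move=> w w' h; exact: (@stop_lt _ _ hs i w w' h).
  - move=> w w' h; apply: h; by rewrite ltnn.
have c_le2 : forall i : 'I_n, c i <= s i - s i.+1.
  move=> i; rewrite /s (@Pr_split _ p n _ (fun w => tau w == i)).
  rewrite (@Pr_ext _ p n (fun w => (i <= tau w)%N && ~~ (tau w == i))
             (fun w => (i.+1 <= tau w)%N)); last first.
    move=> w; rewrite /= -(inj_eq val_inj) /= eq_sym andbC.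
    by rewrite -ltn_neqAle.
  rewrite addrK; apply: Pr_sub => // w /andP[/eqP e _]; by rewrite e leqnn eqxx.
have s0 : s 0%N = 1.
  by rewrite /s (@Pr_ext _ p n _ (fun _ => true)) ?Pr_true.
have sn : s n = 0.
  rewrite /s (@Pr_ext _ p n _ (fun _ => false)) ?Pr_false // => w.
  by rewrite leqNgt ltn_ord.
have step : forall i : 'I_n, c i * Tq p n i.+1 <= s i * W i - s i.+1 * W i.+1.
  move=> i; rewrite /W Tq_step Sr_step.
  have hci := c_le1 i; have hci2 := c_le2 i.
  have c0 : 0 <= c i by apply: Pr_ge0.
  have s'0 : 0 <= s i.+1 by apply: Pr_ge0.
  have T0 : 0 <= Tq p n i.+1 by apply: Tq_ge0.
  have /andP[S0 S1] := @Sr_bounds _ p n i.+1 hp hq.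
  have S2 : Sr p n i.+1 <= 1 by apply: le_trans S1 hS.
  have /andP[p0 p1] := hp i.+1.
  have qne : 1 - p i.+1 != 0 by rewrite gt_eqF // hq.
  move: hci hci2 c0 s'0 T0 S0 S2 p0 p1 qne.
  move: (c i) (s i) (s i.+1) (Tq p n i.+1) (Sr p n i.+1) (p i.+1) => C s1 s2 T S P.
  move=> h1 h2 h3 h4 h5 h6 h7 h8 h9 qne.
  have e : (1 - P) * T * (P / (1 - P) + S) = P * T + (1 - P) * T * S by field.
  rewrite e -subr_ge0.
  have -> : s1 * (P * T + (1 - P) * T * S) - s2 * (T * S) - C * T =
     (P * s1 - C) * (T * (1 - S)) + (s1 - C - s2) * (T * S) by ring.
  apply: addr_ge0; apply: mulr_ge0; try lra; apply: mulr_ge0; lra.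
rewrite win_eq; apply: le_trans (ler_sum _ (fun i _ => step i)) _.
rewrite -(big_mkord xpredT (fun i => s i * W i - s i.+1 * W i.+1)).
rewrite (@telescope_sumr_eq _ 0 n (fun k => - (s k * W k))) //; last first.
  by move=> k _; rewrite opprK addrC.
by rewrite s0 sn /W mul0r oppr0 sub0r opprK mul1r.
Qed.

Definition fst1 {n} (w : outcome n.+1) : 'I_n.+1 :=
  if [pick j | w j && [forall k : 'I_n.+1, (k < j)%N ==> ~~ w k]] is Some j then j
  else ord_max.

Definition tauS n : {ffun outcome n.+1 -> 'I_n.+1} := [ffun w => @fst1 n w].

Lemma first_exists n (w : outcome n) (j : 'I_n) : w j ->
  exists j0 : 'I_n, w j0 /\ forall k : 'I_n, (k < j0)%N -> ~~ w k.
Proof.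
move=> hj.
have ex : exists m, [exists k : 'I_n, (val k == m) && w k].
  by exists (val j); apply/existsP; exists j; rewrite eqxx hj.
case: (ex_minnP ex) => m /existsP [k /andP[/eqP ek wk]] hmin.
exists k; split => // k' hk'; apply/negP => wk'.
have : (m <= k')%N by apply: hmin; apply/existsP; exists k'; rewrite eqxx wk'.
by rewrite -ek leqNgt hk'.
Qed.

Lemma fst1_eq n (w : outcome n.+1) (j : 'I_n.+1) :
  w j -> (forall k : 'I_n.+1, (k < j)%N -> ~~ w k) -> fst1 w = j.
Proof.
move=> hj hb; rewrite /fst1; case: pickP => [j' /andP[hj' /forallP hb']|hn].
  case: (ltngtP j' j) => h.
  - by have := hb j' h; rewrite hj'.
  - by have /implyP := hb' j; move/(_ h); rewrite hj.
  - exact: val_inj.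
have := hn j; rewrite hj /=; move/negP; case; apply/forallP => k; apply/implyP; exact: hb.
Qed.

Lemma fst1_none n (w : outcome n.+1) :
  (forall k, ~~ w k) -> fst1 w = ord_max.
Proof.
move=> h; rewrite /fst1; case: pickP => [j /andP[hj _]|//].
by have := h j; rewrite hj.
Qed.

Lemma tauS_stopping n : is_stopping (tauS n).
Proof.
apply/forallP => w; apply/forallP => w'; apply/implyP => /forallP H.
rewrite /tauS !ffunE in H *.
case: (boolP [exists j, w j]) => [/existsP [j wj]|hn].
  have [j0 [w0 b0]] := @first_exists _ w j wj.
  have e : fst1 w = j0 by apply: fst1_eq.
  rewrite e; apply/eqP; apply: fst1_eq.
    by have /implyP := H j0; rewrite e leqnn => /(_ isT) /eqP <-.
  move=> k hk; have /implyP := H k; rewrite e (ltnW hk) => /(_ isT) /eqP <-.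
  exact: b0.
have e : fst1 w = ord_max by apply: fst1_none => k; apply/negP => wk; move/existsP: hn; apply; exists k.
have ww : w = w'.
  apply/ffunP => k; apply/eqP; have /implyP := H k; apply; rewrite e; exact: leq_ord.
by rewrite -ww.
Qed.

Lemma tauS_success n (w : outcome n.+1) (j : 'I_n.+1) :
  success (tauS n) w && (tauS n w == j) = [forall k, w k == (k == j)].
Proof.
rewrite /success /tauS !ffunE.
apply/idP/forallP.
  move=> /andP[/andP[hw /forallP hafter] /eqP e] k.
  have [j0 [w0 b0]] := @first_exists _ w _ hw.
  have e0 : fst1 w = j0 by apply: fst1_eq.
  rewrite e0 in e hafter; subst j.
  case: (ltngtP k j0) => h.
  - by rewrite (negbTE (b0 k h)) -(inj_eq val_inj) /= (ltn_eqF h).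
  - have /implyP := hafter k; move=> /(_ h) /negbTE ->.
    by rewrite -(inj_eq val_inj) /= (gtn_eqF h).
  - have -> : k = j0 by apply: val_inj.
    by rewrite eqxx w0.
move=> h.
have wj : w j by have /eqP -> := h j; rewrite eqxx.
have hk : forall k, k != j -> ~~ w k.
  by move=> k hk; have /eqP -> := h k; rewrite (negbTE hk).
have e : fst1 w = j.
  apply: fst1_eq => // k hk'; apply: hk; rewrite -(inj_eq val_inj) /= ltn_eqF //.
rewrite e wj eqxx andbT /=; apply/forallP => k; apply/implyP => hk'.
apply: hk; rewrite -(inj_eq val_inj) /= gtn_eqF //.
Qed.

Lemma win_tauS (R : realFieldType) (p : nat -> R) n :
  win_prob p (tauS n) =
  \sum_(j < n.+1) p j.+1 * \prod_(k < n.+1 | k != j) (1 - p k.+1).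
Proof.
rewrite /win_prob (partition_big (fun w => tauS n w) xpredT) //=.
apply: eq_bigr => j _.
rewrite (eq_bigl _ _ (fun w => @tauS_success n w j)).
have := @Pr_forall _ p n.+1 (fun k b => b == (k == j)); rewrite /Pr => ->.
rewrite (bigD1 j) //= eqxx big_mkcond big_bool /= addr0; congr (_ * _).
apply: eq_bigr => k hk; rewrite (negbTE hk) big_mkcond big_bool /= add0r //.
Qed.

Theorem lemma3p1 (R : realFieldType) (p : nat -> R)
    (hp : forall j, 0 <= p j <= 1) (n : nat) (hn : (1 <= n)%N)
    (hN : exists m : nat, (n.+1 <= m)%N /\ R1_le1 p m) :
  V p n <= V p n.+1.
Proof.
case: hN => m [hm [hq hsum]].
have hqj : forall j, (j < m)%N -> 0 < 1 - p j.+1.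
  by move=> j hj; rewrite subr_gt0; apply: hq; rewrite ltnS hj.
have hq1 : forall k : 'I_n.+1, 0 < 1 - p k.+1.
  move=> k; apply: hqj; exact: leq_trans (ltn_ord k) hm.
have hq0 : forall k : 'I_n, 0 < 1 - p k.+1.
  move=> k; apply: hqj; apply: leq_trans (ltn_ord k) _; exact: ltnW.
have rge0 : forall j, (j < m)%N -> 0 <= p j.+1 / (1 - p j.+1).
  move=> j hj; have /andP[h _] := hp j.+1; apply: divr_ge0 => //; exact: ltW (hqj j hj).
have S0e : Sr p n 0 = \sum_(k < n) p k.+1 / (1 - p k.+1).
  by rewrite /Sr; apply: eq_bigl.
have T0e : Tq p n 0 = \prod_(k < n) (1 - p k.+1).
  by rewrite /Tq; apply: eq_bigl.
have hS : Sr p n 0 <= 1.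
  apply: le_trans hsum; rewrite big_add1 /= S0e -(big_mkord xpredT (fun k => p k.+1 / (1 - p k.+1))).
  rewrite (@big_cat_nat _ _ _ n 0 m) //=; last exact: ltnW.
  rewrite lerDl; rewrite big_nat_cond; apply: sumr_ge0 => j /andP[/andP[_ hj] _].
  exact: rge0.
have /andP[S0 _] := @Sr_bounds _ p n 0 hp hq0.
have Vup : V p n <= Tq p n 0 * Sr p n 0.
  rewrite /V; apply: (big_ind (fun x => x <= Tq p n 0 * Sr p n 0)).
  - by apply: mulr_ge0 => //; apply: Tq_ge0.
  - by move=> x y hx hy; rewrite ge_max hx hy.
  - by move=> tau hs; apply: win_upper.
apply: le_trans Vup _.
apply: (@le_trans _ _ (win_prob p (tauS n))); last first.
  by rewrite /V (bigD1 (tauS n)) ?tauS_stopping //= le_max lexx.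
rewrite win_tauS.
have -> : \sum_(j < n.+1) p j.+1 * \prod_(k < n.+1 | k != j) (1 - p k.+1) =
   (\prod_(k < n.+1) (1 - p k.+1)) * \sum_(j < n.+1) p j.+1 / (1 - p j.+1).
  rewrite mulr_sumr; apply: eq_bigr => j _; rewrite [X in _ = X * _](bigD1 j) //=.
  have qne : 1 - p j.+1 != 0 by rewrite gt_eqF // hq1.
  by field.
rewrite big_ord_recr big_ord_recr /= T0e S0e -T0e -S0e.
have qn : 0 < 1 - p n.+1 by apply: hqj.
have /andP[pn0 pn1] := hp n.+1.
have T0 : 0 <= Tq p n 0 by apply: Tq_ge0.
move: (Tq p n 0) (Sr p n 0) (p n.+1) qn pn0 pn1 T0 S0 hS => Q S P qn pn0 pn1 T0 S0 hS.
have e : Q * (1 - P) * (S + P / (1 - P)) = Q * ((1 - P) * S + P).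
  by field; rewrite gt_eqF.
rewrite e -subr_ge0.
have -> : Q * ((1 - P) * S + P) - Q * S = (Q * P) * (1 - S) by ring.
by apply: mulr_ge0; [apply: mulr_ge0 | lra].
Qed.
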